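(* Let $G$ be a connected graph on $n\ge2$ vertices labeled so that $\mathbb{M}_1\ge\mathbb{M}_2\ge\cdots\ge\mathbb{M}_n$, where $\mathbb{M}_i=\frac{\sum_{j=1}^n d_{ij}\mathbb{D}_j}{\mathbb{D}_i}$. Let $N=\max_{1\le i,j\le n}d_{ij}\mathbb{D}_j/\mathbb{D}_i$. Then for $1\le i\le n$, \[\rho(\mathbb{D}(G))\le \frac{\mathbb{M}_i-N+\sqrt{(\mathbb{M}_i+N)^2+4N\sum_{k=1}^{i-1}(\mathbb{M}_k-\mathbb{M}_i)}}{2}.\] Equality holds if and only if $\mathbb{M}_1=\cdots=\mathbb{M}_n$, or for some $2\le t\le i$: (i) $d_{kl}\mathbb{D}_l/\mathbb{D}_k=N$ for all $1\le k\le n$, $1\le l\le t-1$, $k\ne l$; (ii) $\mathbb{M}_t=\cdots=\mathbb{M}_n$.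
   Context: $\mathbb{D}(G)=(d_{ij})$ is the distance matrix of $G$; $\mathbb{D}_i=\sum_j d_{ij}$ is the transmission of $v_i$; $\mathbb{M}_i$ is the average transmission; $\rho$ is the spectral radius. An empty sum equals $0$. *)

(* Defs.v *)
(* Numbers live in algC (algebraic complex numbers), so that
   every eigenvalue of the (real symmetric) distance matrix exists. *)
From HB Require Import structures.
From mathcomp Require Import all_boot all_order all_algebra all_field.
Set Implicit Arguments. Unset Strict Implicit. Unset Printing Implicit Defensive.
Import Order.TTheory GRing.Theory Num.Theory.
Local Open Scope ring_scope.

Definition simple_graph (n : nat) (adj : rel 'I_n) : Prop :=
  symmetric adj /\ irreflexive adj.

Definition connected_graph (n : nat) (adj : rel 'I_n) : Prop :=
  forall i j : 'I_n, connect adj i j.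

Definition walk_of_length (n : nat) (adj : rel 'I_n) (i j : 'I_n) (k : nat) : bool :=
  [exists p : k.-tuple 'I_n, path adj i p && (last i p == j)].

(* Shortest-path distance d_{ij}: the least k < n admitting a walk of length k
   (in a connected graph on n vertices such a k always exists). *)
Definition dist (n : nat) (adj : rel 'I_n) (i j : 'I_n) : nat :=
  find (walk_of_length adj i j) (iota 0 n).

Definition dist_mx (n : nat) (adj : rel 'I_n) : 'M[algC]_n :=
  \matrix_(i, j) (dist adj i j)%:R.

Definition transmission (n : nat) (adj : rel 'I_n) (i : 'I_n) : nat :=
  (\sum_(j < n) dist adj i j)%N.

Definition tratio (n : nat) (adj : rel 'I_n) (k l : 'I_n) : algC :=
  (dist adj k l * transmission adj l)%:R / (transmission adj k)%:R.

Definition avg_trans (n : nat) (adj : rel 'I_n) (i : 'I_n) : algC :=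
  (\sum_(j < n) dist adj i j * transmission adj j)%:R / (transmission adj i)%:R.

(* N = max_{i,j} d_ij D_j / D_i  (all these values are nonnegative reals). *)
Definition Nmax (n : nat) (adj : rel 'I_n) : algC :=
  \big[Num.max/0]_(i < n) \big[Num.max/0]_(j < n) tratio adj i j.

(* The eigenvalues of A (with multiplicity): the roots of its characteristic
   polynomial, which splits over the algebraically closed field algC. *)
Definition eigenvalues (n : nat) (A : 'M[algC]_n) : seq algC :=
  sval (closed_field_poly_normal (char_poly A)).

Definition spectral_radius (n : nat) (A : 'M[algC]_n) : algC :=
  \big[Num.max/0]_(z <- eigenvalues A) `|z|.

(* Main.v *)
Require Import Defs.
From HB Require Import structures.
From mathcomp Require Import all_boot all_order all_algebra all_field.
From mathcomp Require Import ring.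
Import Order.TTheory GRing.Theory Num.Theory.
Set Implicit Arguments. Unset Strict Implicit. Unset Printing Implicit Defensive.
Local Open Scope ring_scope.

Lemma max_ub {x y : algC} : 0 <= x -> 0 <= y -> x <= Num.max x y /\ y <= Num.max x y.
Proof.
move=> hx hy; rewrite /Order.max.
have rx : x \is Num.real by exact: ger0_real.
have ry : y \is Num.real by exact: ger0_real.
case: ifP => h; first by split => //; exact: ltW.
split => //; move/negbT: h; by rewrite real_ltNge // negbK.
Qed.

Lemma max_cases (x y : algC) : Num.max x y = x \/ Num.max x y = y.
Proof. by rewrite /Order.max; case: ifP; auto. Qed.

Section BM.
Variables (I : eqType) (F : I -> algC).
Hypothesis F0 : forall x, 0 <= F x.

Lemma bigmax_ge0 s : 0 <= \big[Num.max/0]_(x <- s) F x.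
Proof.
elim: s => [|a s IH]; first by rewrite big_nil.
by rewrite big_cons; case: (max_cases (F a) (\big[Num.max/0]_(x <- s) F x)) => ->.
Qed.

Lemma bigmax_ge s y : y \in s -> F y <= \big[Num.max/0]_(x <- s) F x.
Proof.
elim: s => [|a s IH] //; rewrite in_cons big_cons => /orP [/eqP ->|ys].
  by case: (max_ub (F0 a) (bigmax_ge0 s)).
case: (max_ub (F0 a) (bigmax_ge0 s)) => _ h; exact: le_trans (IH ys) h.
Qed.

Lemma bigmax_le s c : 0 <= c -> (forall x, x \in s -> F x <= c) ->
  \big[Num.max/0]_(x <- s) F x <= c.
Proof.
move=> c0; elim: s => [|a s IH] h; first by rewrite big_nil.
rewrite big_cons; case: (max_cases (F a) (\big[Num.max/0]_(x <- s) F x)) => ->.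
  by apply: h; rewrite mem_head.
by apply: IH => x xs; apply: h; rewrite in_cons xs orbT.
Qed.

Lemma bigmax_att s : \big[Num.max/0]_(x <- s) F x = 0 \/
  exists2 y, y \in s & \big[Num.max/0]_(x <- s) F x = F y.
Proof.
elim: s => [|a s IH]; first by left; rewrite big_nil.
rewrite big_cons; case: (max_cases (F a) (\big[Num.max/0]_(x <- s) F x)) => ->.
  by right; exists a => //; rewrite mem_head.
case: IH => [->|[y ys ->]]; first by left.
by right; exists y => //; rewrite in_cons ys orbT.
Qed.
End BM.
Arguments bigmax_ge0 {I F}.
Arguments bigmax_ge {I F}.
Arguments bigmax_le {I F}.
Arguments bigmax_att {I F}.

Lemma eigenvalue_tr (F : fieldType) n (A : 'M[F]_n) a :
  eigenvalue A^T a = eigenvalue A a.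
Proof.
rewrite /eigenvalue /eigenspace -!mxrank_eq0 !mxrank_ker.
have -> : A^T - a%:M = (A - a%:M)^T by rewrite linearB /= tr_scalar_mx.
by rewrite mxrank_tr.
Qed.

Lemma mem_eig n (A : 'M[algC]_n) z : (z \in eigenvalues A) = eigenvalue A^T z.
Proof.
rewrite eigenvalue_tr eigenvalue_root_char /eigenvalues.
case: closed_field_poly_normal => r /= Hr.
rewrite [in RHS]Hr rootZ ?root_prod_XsubC //.
by rewrite lead_coef_eq0 monic_neq0 // char_poly_monic.
Qed.

Lemma eig_vec n (A : 'M[algC]_n) z : z \in eigenvalues A ->
  exists2 v : 'rV_n, v != 0 & forall k, \sum_l A k l * v 0 l = z * v 0 k.
Proof.
rewrite mem_eig => /eigenvalueP [v Hv v0]; exists v => // k.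
have := congr1 (fun M : 'rV[algC]_n => M 0 k) Hv; rewrite !mxE => <-.
by apply: eq_bigr => l _; rewrite mxE mulrC.
Qed.

Lemma vec_eig n (A : 'M[algC]_n) z (v : 'rV_n) : v != 0 ->
  (forall k, \sum_l A k l * v 0 l = z * v 0 k) -> z \in eigenvalues A.
Proof.
move=> v0 H; rewrite mem_eig; apply/eigenvalueP; exists v => //.
apply/rowP => k; rewrite !mxE -H; apply: eq_bigr => l _; by rewrite mxE mulrC.
Qed.

Lemma dist_diag n (adj : rel 'I_n) k : dist adj k k = 0%N.
Proof.
move: (ltn_ord k); rewrite /dist; case: n adj k => // m adj k _ /=.
suff -> : walk_of_length adj k k 0 by [].
rewrite /walk_of_length; apply/existsP; exists [tuple] => /=.
exact: eqxx.
Qed.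

Lemma dist_neq0 n (adj : rel 'I_n) k l : k != l -> dist adj k l != 0%N.
Proof.
move=> kl; move: (ltn_ord k); rewrite /dist; case: n adj k l kl => // m adj k l kl _ /=.
suff -> : walk_of_length adj k l 0 = false by [].
rewrite /walk_of_length; apply/negbTE/negP => /existsP [p /andP [_]].
have -> : tval p = [::] by apply/nilP; rewrite /nilp size_tuple.
by rewrite /= (negbTE kl).
Qed.

Lemma trans_gt0 n (adj : rel 'I_n) k : (2 <= n)%N -> (0 < transmission adj k)%N.
Proof.
move=> Hn.
have : (0 < #|predC1 k|)%N by rewrite cardC1 card_ord -subn1 subn_gt0.
case/card_gt0P => l /=; rewrite inE => lk.
rewrite /transmission (bigD1 l) //= lt0n addn_eq0 negb_and.
by rewrite dist_neq0 // eq_sym.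
Qed.
Section X. End X.
Notation r := avg_trans.
Notation b := tratio.

Lemma Tnz n (adj : rel 'I_n) k : (2 <= n)%N -> (transmission adj k)%:R != 0 :> algC.
Proof. by move=> Hn; rewrite pnatr_eq0 -lt0n trans_gt0. Qed.

Lemma b_ge0 n (adj : rel 'I_n) k l : 0 <= b adj k l.
Proof. by rewrite /tratio divr_ge0 ?ler0n. Qed.

Lemma b_diag n (adj : rel 'I_n) k : b adj k k = 0.
Proof. by rewrite /tratio dist_diag mul0n mul0r. Qed.

Lemma b_gt0 n (adj : rel 'I_n) k l : (2 <= n)%N -> k != l -> 0 < b adj k l.
Proof.
move=> Hn kl; rewrite /tratio divr_gt0 // ltr0n ?trans_gt0 // muln_gt0 trans_gt0 //.
by rewrite lt0n dist_neq0.
Qed.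

Lemma Tb n (adj : rel 'I_n) k l : (2 <= n)%N ->
  (transmission adj k)%:R * b adj k l = (dist adj k l)%:R * (transmission adj l)%:R.
Proof. by move=> Hn; rewrite /tratio mulrC divfK ?Tnz // natrM. Qed.

Lemma rE n (adj : rel 'I_n) k : r adj k = \sum_l b adj k l.
Proof. by rewrite /avg_trans natr_sum mulr_suml. Qed.

Lemma b_leN n (adj : rel 'I_n) k l : b adj k l <= Nmax adj.
Proof.
rewrite /Nmax.
have h1 : forall k, 0 <= \big[Num.max/0]_(j < n) b adj k j.
  move=> k'; exact: (bigmax_ge0 (fun j => b_ge0 adj k' j)).
have H1 := bigmax_ge h1 _ _ (mem_index_enum k).
have H2 := bigmax_ge (fun j => b_ge0 adj k j) _ _ (mem_index_enum l).
exact: le_trans H2 H1.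
Qed.

Lemma N_ge0 n (adj : rel 'I_n) : 0 <= Nmax adj.
Proof.
rewrite /Nmax; apply: bigmax_ge0 => k; exact: (bigmax_ge0 (fun j => b_ge0 adj k j)).
Qed.

Lemma r_gt0 n (adj : rel 'I_n) k : (2 <= n)%N -> 0 < r adj k.
Proof.
move=> Hn; have : (0 < #|predC1 k|)%N by rewrite cardC1 card_ord -subn1 subn_gt0.
case/card_gt0P => l /=; rewrite inE => lk.
have h : 0 < b adj k l by apply: b_gt0; rewrite // eq_sym.
rewrite rE (bigD1 l) //=; apply: lt_le_trans h _.
by rewrite lerDl sumr_ge0 // => j _; exact: b_ge0.
Qed.
Definition ssum n (adj : rel 'I_n) (i : 'I_n) :=
  \sum_(k < n | (k < i)%N) (r adj k - r adj i).
Definition rho n (adj : rel 'I_n) (i : 'I_n) :=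
  (r adj i - Nmax adj + sqrtC ((r adj i + Nmax adj) ^+ 2
     + 4%:R * Nmax adj * ssum adj i)) / 2%:R.
Definition del n (adj : rel 'I_n) (i l : 'I_n) :=
  if (l < i)%N then (r adj l - r adj i) / (rho adj i + Nmax adj) else 0.
Definition ex n (adj : rel 'I_n) (i k : 'I_n) :=
  (rho adj i + Nmax adj) * del adj i k - (r adj k - r adj i).
Definition slack n (adj : rel 'I_n) (i k : 'I_n) :=
  ex adj i k + \sum_(l | l != k) (Nmax adj - b adj k l) * del adj i l.
Definition wt n (adj : rel 'I_n) (i l : 'I_n) : algC :=
  (transmission adj l)%:R * (1 + del adj i l).

Lemma ssum_ge0 n (adj : rel 'I_n) i
  (Hs : forall k l : 'I_n, (k <= l)%N -> r adj l <= r adj k) : 0 <= ssum adj i.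
Proof. by apply: sumr_ge0 => k ki; rewrite subr_ge0 Hs // ltnW. Qed.

Lemma rhoN_gt0 n (adj : rel 'I_n) i (Hn : (2 <= n)%N)
  (Hs : forall k l : 'I_n, (k <= l)%N -> r adj l <= r adj k) :
  0 < rho adj i + Nmax adj.
Proof.
set X := (r adj i + Nmax adj) ^+ 2 + 4%:R * Nmax adj * ssum adj i.
have -> : rho adj i + Nmax adj = (r adj i + Nmax adj + sqrtC X) / 2%:R.
  by rewrite /rho -/X; field.
apply: divr_gt0; last by rewrite ltr0n.
apply: lt_le_trans (r_gt0 adj i Hn) _.
rewrite -addrA lerDl addr_ge0 ?N_ge0 // sqrtC_ge0 /X addr_ge0 //.
  by rewrite exprn_ge0 // addr_ge0 ?N_ge0 // ltW // r_gt0.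
by rewrite !mulr_ge0 ?N_ge0 ?ssum_ge0.
Qed.

Lemma rho_quad n (adj : rel 'I_n) i :
  rho adj i * (rho adj i + Nmax adj) =
  r adj i * (rho adj i + Nmax adj) + Nmax adj * ssum adj i.
Proof.
rewrite /rho; set a := r adj i; set N := Nmax adj; set s := ssum adj i.
set q := sqrtC _.
have hq : q ^+ 2 = (a + N) ^+ 2 + 4%:R * N * s by rewrite sqrtCK.
apply/eqP; rewrite -subr_eq0.
have -> : (a - N + q) / 2%:R * ((a - N + q) / 2%:R + N) -
  (a * ((a - N + q) / 2%:R + N) + N * s) =
  (q ^+ 2 - ((a + N) ^+ 2 + 4%:R * N * s)) / 4%:R by field.
by rewrite hq subrr mul0r.
Qed.
Lemma sum_del n (adj : rel 'I_n) i :
  \sum_l del adj i l = ssum adj i / (rho adj i + Nmax adj).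
Proof. by rewrite /del -big_mkcond /= /ssum mulr_suml. Qed.

Lemma rho_eq n (adj : rel 'I_n) (i : 'I_n) (Hn : (2 <= n)%N)
  (Hs : forall k l : 'I_n, (k <= l)%N -> r adj l <= r adj k) :
  rho adj i = r adj i + Nmax adj * \sum_l del adj i l.
Proof.
have hp := rhoN_gt0 i Hn Hs; have hq := rho_quad adj i.
rewrite sum_del; move: hp hq; set p := rho adj i; set N := Nmax adj.
set a := r adj i; set s := ssum adj i => hp hq.
have hp0 : p + N != 0 by rewrite gt_eqF.
have -> : N * (s / (p + N)) = (p * (p + N) - a * (p + N)) / (p + N).
  by rewrite hq; field.
by field.
Qed.

Lemma del_ge0 n (adj : rel 'I_n) (i l : 'I_n) (Hn : (2 <= n)%N)
  (Hs : forall k l : 'I_n, (k <= l)%N -> r adj l <= r adj k) : 0 <= del adj i l.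
Proof.
rewrite /del; case: ifP => // li.
by rewrite divr_ge0 ?subr_ge0 ?Hs ?ltW ?rhoN_gt0 // ltnW.
Qed.

Lemma rho_gt0 n (adj : rel 'I_n) (i : 'I_n) (Hn : (2 <= n)%N)
  (Hs : forall k l : 'I_n, (k <= l)%N -> r adj l <= r adj k) : 0 < rho adj i.
Proof.
rewrite (rho_eq i Hn Hs); apply: lt_le_trans (r_gt0 adj i Hn) _.
by rewrite lerDl mulr_ge0 ?N_ge0 // sumr_ge0 // => l _; exact: del_ge0.
Qed.

Lemma ex_lt n (adj : rel 'I_n) (i k : 'I_n) (Hn : (2 <= n)%N)
  (Hs : forall k l : 'I_n, (k <= l)%N -> r adj l <= r adj k) :
  (k < i)%N -> ex adj i k = 0.
Proof.
move=> ki; rewrite /ex /del ki mulrC divfK ?subrr //.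
by rewrite gt_eqF // rhoN_gt0.
Qed.

Lemma del_ge n (adj : rel 'I_n) (i k : 'I_n) : (i <= k)%N -> del adj i k = 0.
Proof. by rewrite /del ltnNge => ->. Qed.

Lemma ex_ge0 n (adj : rel 'I_n) (i k : 'I_n) (Hn : (2 <= n)%N)
  (Hs : forall k l : 'I_n, (k <= l)%N -> r adj l <= r adj k) : 0 <= ex adj i k.
Proof.
case: (ltnP k i) => ki; first by rewrite ex_lt.
by rewrite /ex del_ge // mulr0 sub0r oppr_ge0 subr_le0 Hs.
Qed.

Lemma slack_ge0 n (adj : rel 'I_n) (i k : 'I_n) (Hn : (2 <= n)%N)
  (Hs : forall k l : 'I_n, (k <= l)%N -> r adj l <= r adj k) : 0 <= slack adj i k.
Proof.
rewrite /slack addr_ge0 ?ex_ge0 // sumr_ge0 // => l _.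
by rewrite mulr_ge0 ?del_ge0 // subr_ge0 b_leN.
Qed.

Lemma slack_eq n (adj : rel 'I_n) (i k : 'I_n) (Hn : (2 <= n)%N)
  (Hs : forall k l : 'I_n, (k <= l)%N -> r adj l <= r adj k) :
  rho adj i * (1 + del adj i k) - \sum_l b adj k l * (1 + del adj i l) =
  slack adj i k.
Proof.
have E := @rho_eq _ adj i Hn Hs.
have -> : \sum_l b adj k l * (1 + del adj i l) =
  r adj k + \sum_(l | l != k) b adj k l * del adj i l.
  under eq_bigr do rewrite mulrDr mulr1.
  rewrite big_split /= -rE; congr (_ + _).
  by rewrite (bigD1 k) //= b_diag mul0r add0r.
move: E; rewrite (bigD1 k) //= /slack /ex.
under [X in _ -> _ = _ + X]eq_bigr do rewrite mulrBl.
rewrite sumrB -mulr_sumr.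
set p := rho adj i; set N := Nmax adj; set d := del adj i k.
set A := \sum_(l | l != k) del adj i l; set B := \sum_(l | l != k) _.
move=> E.
apply/eqP; rewrite -subr_eq0.
have -> : p * (1 + d) - (r adj k + B) - ((p + N) * d - (r adj k - r adj i) + (N * A - B))
  = p - (r adj i + N * (d + A)) by ring.
by rewrite -E subrr.
Qed.

Lemma row_eq n (adj : rel 'I_n) (i k : 'I_n) (Hn : (2 <= n)%N)
  (Hs : forall k l : 'I_n, (k <= l)%N -> r adj l <= r adj k) :
  rho adj i * wt adj i k - \sum_l (dist adj k l)%:R * wt adj i l =
  (transmission adj k)%:R * slack adj i k.
Proof.
rewrite -(@slack_eq _ adj i k Hn Hs) mulrBr /wt; congr (_ - _); first by ring.
rewrite mulr_sumr; apply: eq_bigr => l _.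
rewrite !mulrA; congr (_ * _).
by rewrite [_ * (_ * _)%:R]mulrC mulfK ?Tnz // natrM.
Qed.
Lemma wt_gt0 n (adj : rel 'I_n) (i l : 'I_n) (Hn : (2 <= n)%N)
  (Hs : forall k l : 'I_n, (k <= l)%N -> r adj l <= r adj k) : 0 < wt adj i l.
Proof.
rewrite /wt mulr_gt0 ?ltr0n ?trans_gt0 //.
by apply: lt_le_trans (ltr01 : (0 : algC) < 1) _; rewrite lerDl del_ge0.
Qed.

Lemma max_row n (adj : rel 'I_n) (i : 'I_n) (Hn : (2 <= n)%N)
  (Hs : forall k l : 'I_n, (k <= l)%N -> r adj l <= r adj k)
  (z : algC) (v : 'rV[algC]_n)
  (H : forall k, \sum_l (dist adj k l)%:R * v 0 l = z * v 0 k) (k : 'I_n) :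
  let m l := `|v 0 l| / wt adj i l in
  (forall l, m l <= m k) ->
  (transmission adj k)%:R * slack adj i k * m k +
   \sum_l (dist adj k l)%:R * wt adj i l * (m k - m l)
  <= (rho adj i - `|z|) * (wt adj i k * m k).
Proof.
move=> m kmax.
have vm : forall l, `|v 0 l| = wt adj i l * m l.
  move=> l; rewrite /m mulrC divfK //; by rewrite gt_eqF // wt_gt0.
set S1 := \sum_l (dist adj k l)%:R * (wt adj i l * m l).
set S2 := \sum_l (dist adj k l)%:R * wt adj i l * (m k - m l).
set S3 := \sum_l (dist adj k l)%:R * wt adj i l.
have h1 : `|z| * (wt adj i k * m k) <= S1.
  rewrite -vm -normrM -H; apply: le_trans (ler_norm_sum _ _ _) _.
  by apply: ler_sum => l _; rewrite normrM ger0_norm ?ler0n // vm.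
have h2 : S1 + S2 = S3 * m k.
  rewrite /S1 /S2 /S3 -big_split mulr_suml; apply: eq_bigr => l _ /=; ring.
have e : (transmission adj k)%:R * slack adj i k = rho adj i * wt adj i k - S3.
  by rewrite -(@row_eq _ adj i k Hn Hs).
rewrite -subr_ge0 e.
have -> : (rho adj i - `|z|) * (wt adj i k * m k) -
   ((rho adj i * wt adj i k - S3) * m k + S2) = S1 - `|z| * (wt adj i k * m k).
  rewrite (_ : S1 = S3 * m k - S2); last by rewrite -h2 addrK.
  ring.
by rewrite subr_ge0.
Qed.
Lemma eig_bound n (adj : rel 'I_n) (i : 'I_n) (Hn : (2 <= n)%N)
  (Hs : forall k l : 'I_n, (k <= l)%N -> r adj l <= r adj k)
  (z : algC) (v : 'rV[algC]_n) (v0 : v != 0)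
  (H : forall k, \sum_l (dist adj k l)%:R * v 0 l = z * v 0 k) :
  `|z| <= rho adj i /\ (`|z| = rho adj i -> forall k, slack adj i k = 0).
Proof.
pose m l := `|v 0 l| / wt adj i l.
have m0 : forall l, 0 <= m l.
  by move=> l; rewrite /m divr_ge0 // ltW // wt_gt0.
have allz : (forall l, m l = 0) -> False.
  move=> h; move/negP: v0; apply; apply/eqP/rowP => l; rewrite mxE.
  move: (h l); rewrite /m => /eqP; rewrite mulf_eq0 invr_eq0 normr_eq0.
  by rewrite (gt_eqF (wt_gt0 _ _ Hn Hs)) orbF => /eqP.
have [k [kmax mk0]] : exists k, (forall l, m l <= m k) /\ 0 < m k.
  case: (@bigmax_att _ m (index_enum 'I_n)) => [h0|[k _ hk]].
    exfalso; apply: allz => l; apply/le_anti; rewrite m0 andbT -h0.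
    exact: (bigmax_ge m0 _ _ (mem_index_enum l)).
  have km : forall l, m l <= m k.
    by move=> l; rewrite -hk; exact: (bigmax_ge m0 _ _ (mem_index_enum l)).
  exists k; split => //; rewrite lt_def m0 andbT; apply/negP => /eqP mk.
  by apply: allz => l; apply/le_anti; rewrite m0 andbT -mk km.
have D0 : forall j, 0 <= (transmission adj j)%:R * slack adj i j * m j.
  move=> j; apply: mulr_ge0; last exact: m0.
  by apply: mulr_ge0; [exact: ler0n | exact: slack_ge0].
have S0 : forall j, (forall l, m l <= m j) ->
    0 <= \sum_l (dist adj j l)%:R * wt adj i l * (m j - m l).
  move=> j jm; apply: sumr_ge0 => l _.
  apply: mulr_ge0; last by rewrite subr_ge0.
  by apply: mulr_ge0; [exact: ler0n | exact: ltW (wt_gt0 _ _ Hn Hs)].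
have wm : 0 < wt adj i k * m k by rewrite mulr_gt0 // wt_gt0.
have Ik := max_row Hn Hs H kmax.
split.
  rewrite -subr_ge0 -(pmulr_lge0 _ wm); apply: le_trans Ik.
  by rewrite addr_ge0 ?D0 ?S0.
move=> hz.
have gen : forall j, (forall l, m l <= m j) ->
   (transmission adj j)%:R * slack adj i j * m j = 0 /\
   \sum_l (dist adj j l)%:R * wt adj i l * (m j - m l) = 0.
  move=> j jm; have Ij := max_row Hn Hs H jm.
  rewrite hz subrr mul0r in Ij.
  have a1 := D0 j; have a2 := S0 j jm.
  split; apply/le_anti; rewrite ?a1 ?a2 andbT.
    by apply: le_trans Ij; rewrite lerDl.
  by apply: le_trans Ij; rewrite lerDr.
have meq : forall l, m l = m k.
  move=> l; case: (eqVneq l k) => [-> //|lk].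
  have T0 : forall l, true -> 0 <= (dist adj k l)%:R * wt adj i l * (m k - m l).
    move=> l' _; apply: mulr_ge0; last by rewrite subr_ge0.
    by apply: mulr_ge0; [exact: ler0n | exact: ltW (wt_gt0 _ _ Hn Hs)].
  have := psumr_eq0P T0 (proj2 (gen k kmax)) => /(_ l isT) /eqP.
  have kl : k != l by rewrite eq_sym.
  rewrite !mulf_eq0 pnatr_eq0 (negbTE (@dist_neq0 _ adj k l kl)) /=.
  have d1 : 1 + del adj i l != 0.
    by rewrite gt_eqF // (lt_le_trans ltr01) // lerDl del_ge0.
  rewrite (negbTE (@Tnz _ adj l Hn)) (negbTE d1) /=.
  by rewrite subr_eq0 => /eqP.
move=> j.
have jm : forall l, m l <= m j by move=> l; rewrite (meq l) (meq j).
have /eqP := (gen j jm).1.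
rewrite (meq j) mulf_eq0 (gt_eqF mk0) orbF mulf_eq0 (negbTE (@Tnz _ adj j Hn)) /=.
by move/eqP.
Qed.
Lemma slack0_parts n (adj : rel 'I_n) (i k : 'I_n) (Hn : (2 <= n)%N)
  (Hs : forall k l : 'I_n, (k <= l)%N -> r adj l <= r adj k) :
  slack adj i k = 0 ->
  ex adj i k = 0 /\ forall l, l != k -> (Nmax adj - b adj k l) * del adj i l = 0.
Proof.
have T0 : forall l, l != k -> 0 <= (Nmax adj - b adj k l) * del adj i l.
  by move=> l _; rewrite mulr_ge0 ?del_ge0 // subr_ge0 b_leN.
move=> /eqP; rewrite /slack paddr_eq0 ?ex_ge0 ?sumr_ge0 // => /andP [/eqP e /eqP s].
by split => //; apply: psumr_eq0P s.
Qed.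

Lemma slack0_disj n (adj : rel 'I_n) (i : 'I_n) (Hn : (2 <= n)%N)
  (Hs : forall k l : 'I_n, (k <= l)%N -> r adj l <= r adj k) :
  (forall k, slack adj i k = 0) ->
  (forall k l : 'I_n, r adj k = r adj l) \/
  (exists t : 'I_n,
     [/\ (1 <= t)%N, (t <= i)%N,
         (forall k l : 'I_n, (l < t)%N -> k != l -> tratio adj k l = Nmax adj)
       & (forall k : 'I_n, (t <= k)%N -> r adj k = r adj t)]).
Proof.
move=> H0.
case: (@arg_minnP _ i (fun t : 'I_n => r adj t == r adj i) (fun t : 'I_n => nat_of_ord t) (eqxx (r adj i))) => t /eqP rt tmin.
have ti : (t <= i)%N by apply: tmin.
have rstep : forall k : 'I_n, (t <= k)%N -> r adj k = r adj i.
  move=> k tk; case: (leqP k i) => ki.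
    by apply/le_anti/andP; split; [rewrite -rt; exact: Hs | exact: Hs].
  have := (proj1 (slack0_parts Hn Hs (H0 k))).
  rewrite /ex del_ge ?(ltnW ki) // mulr0 sub0r => /eqP.
  by rewrite oppr_eq0 subr_eq0 => /eqP.
case: (posnP t) => t0.
  by left => k l; rewrite !rstep ?t0.
right; exists t; split => //.
  move=> k l lt kl.
  have li : (l < i)%N by apply: leq_trans lt ti.
  have rl : r adj l != r adj i.
    apply/negP => /eqP/eqP h; have := tmin l h; by rewrite leqNgt lt.
  have := (proj2 (slack0_parts Hn Hs (H0 k))) l; rewrite eq_sym => /(_ kl) /eqP.
  rewrite mulf_eq0 /del li mulf_eq0 invr_eq0 (gt_eqF (rhoN_gt0 _ Hn Hs)) orbF.
  rewrite [X in _ || X]subr_eq0 (negbTE rl) orbF subr_eq0 => /eqP <- //.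
by move=> k tk; rewrite rstep // rt.
Qed.

Lemma disj_slack0 n (adj : rel 'I_n) (i : 'I_n) (Hn : (2 <= n)%N)
  (Hs : forall k l : 'I_n, (k <= l)%N -> r adj l <= r adj k) :
  (forall k l : 'I_n, r adj k = r adj l) \/
  (exists t : 'I_n,
     [/\ (1 <= t)%N, (t <= i)%N,
         (forall k l : 'I_n, (l < t)%N -> k != l -> tratio adj k l = Nmax adj)
       & (forall k : 'I_n, (t <= k)%N -> r adj k = r adj t)]) ->
  forall k, slack adj i k = 0.
Proof.
case=> [Heq|[t [t1 ti Hb Hr]]] k.
  have d0 : forall l, del adj i l = 0.
    by move=> l; rewrite /del (Heq l i) subrr mul0r if_same.
  rewrite /slack /ex d0 mulr0 (Heq k i) subrr subrr add0r.
  by apply: big1 => l _; rewrite d0 mulr0.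
have rti : r adj i = r adj t by apply: Hr.
rewrite /slack.
have -> : ex adj i k = 0.
  case: (ltnP k i) => ki; first exact: ex_lt.
  by rewrite /ex del_ge // mulr0 Hr ?(leq_trans ti) // rti subrr subrr.
rewrite add0r; apply: big1 => l lk.
case: (ltnP l t) => lt.
  by rewrite Hb ?subrr ?mul0r // eq_sym.
rewrite /del; case: ifP => li; last by rewrite mulr0.
by rewrite Hr // rti subrr mul0r mulr0.
Qed.
Lemma dist_eig n (adj : rel 'I_n) z :
  z \in eigenvalues (dist_mx adj) ->
  exists2 v : 'rV[algC]_n, v != 0 &
    forall k, \sum_l (dist adj k l)%:R * v 0 l = z * v 0 k.
Proof.
move/eig_vec => [v v0 H]; exists v => // k; rewrite -H.
by apply: eq_bigr => l _; rewrite mxE.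
Qed.

Unset Implicit Arguments.

Theorem corollary7 (n : nat) (adj : rel 'I_n)
  (Hn : (2 <= n)%N)
  (Hsimple : simple_graph adj)
  (Hconn : connected_graph adj)
  (Hsorted : forall k l : 'I_n, (k <= l)%N -> avg_trans adj l <= avg_trans adj k)
  (i : 'I_n) :
  let M := avg_trans adj in
  let N := Nmax adj in
  let bound :=
    (M i - N + sqrtC ((M i + N) ^+ 2
                      + 4%:R * N * \sum_(k < n | (k < i)%N) (M k - M i))) / 2%:R in
  spectral_radius (dist_mx adj) <= bound /\
  (spectral_radius (dist_mx adj) = bound <->
     (forall k l : 'I_n, M k = M l) \/
     (exists t : 'I_n,
        [/\ (1 <= t)%N, (t <= i)%N,
            (forall k l : 'I_n, (l < t)%N -> k != l -> tratio adj k l = N)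
          & (forall k : 'I_n, (t <= k)%N -> M k = M t)])).
Proof.
move=> M N bound.
have -> : bound = rho adj i by [].
rewrite /M /N.
have rg := rho_gt0 i Hn Hsorted.
have up : spectral_radius (dist_mx adj) <= rho adj i.
  rewrite /spectral_radius; apply: bigmax_le; first exact: ltW.
  move=> z /dist_eig [v v0 H].
  exact: (proj1 (eig_bound i Hn Hsorted v0 H)).
split => //; split.
  move=> heq; apply: (slack0_disj Hn Hsorted) => k.
  move: heq; rewrite /spectral_radius.
  case: (@bigmax_att _ (fun z : algC => `|z|) (eigenvalues (dist_mx adj))) => [->|[z zin ->]].
    by move=> h; move: rg; rewrite -h ltxx.
  move=> hz; move: zin => /dist_eig [v v0 H].
  exact: (proj2 (eig_bound i Hn Hsorted v0 H)) hz k.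
move=> hd; have H0 := disj_slack0 Hn Hsorted hd.
apply/le_anti; rewrite up /=.
have rin : rho adj i \in eigenvalues (dist_mx adj).
  apply: (@vec_eig _ _ _ (\row_l wt adj i l)).
    apply/negP => /eqP/rowP/(_ i); rewrite !mxE => /eqP.
    by rewrite gt_eqF // wt_gt0.
  move=> k; rewrite mxE.
  have := @row_eq _ adj i k Hn Hsorted; rewrite H0 mulr0 => /eqP.
  rewrite subr_eq0 => /eqP ->; apply: eq_bigr => l _; by rewrite !mxE.
have := @bigmax_ge _ (fun z : algC => `|z|) (fun z => normr_ge0 z) _ _ rin.
by rewrite ger0_norm // ltW.
Qed.
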